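(* Let $m,n\ge1$, $N=2^m$, $D=2^{m+2}$, and fix $\mathbf x=(x_1,\dots,x_n)\in\{0,\dots,N-1\}^n$. Let $\mathbf y=(y_1,\dots,y_n)$, $v$ and $v_1,\dots,v_{n-1}$ be independent and uniformly distributed on $\{0,\dots,N-1\}$ (each coordinate), and put $v_n=\big(4v-4\sum_{i=1}^{n-1}v_i \bmod D\big)/4\in\{0,\dots,N-1\}$ (i.e. $v_n\equiv v-\sum_{i<n}v_i\pmod N$). For $i=1,\dots,n$ let $p_i=2x_i+1$, $q_i=2y_i+1$, $s_i=4v_i-2y_i-1\bmod D$ and $M_i=s_i+p_iq_i\bmod D$. Let $M=(M_1,\dots,M_n)$, $X_B=(\mathbf y,v)$ and $u=\sum_{i=1}^n x_iy_i+v\bmod N$. Then the conditional mutual information satisfies $H(M:X_B\mid u)=0$.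
   Context: $H(\cdot:\cdot\mid\cdot)$ is the Shannon conditional mutual information. This models a semi-honest Alice (with input $\mathbf x$) who learns all values $M_i$ in the scalar-product protocol, and $X_B$ is Bob's private input; the conclusion says she learns nothing about $X_B$ beyond the intended output $u$. *)

(* Defs.v *)
From mathcomp Require Import all_boot all_order all_algebra.
From mathcomp Require Import reals exp.
Set Implicit Arguments. Unset Strict Implicit. Unset Printing Implicit Defensive.
Import Order.TTheory GRing.Theory Num.Theory.
Local Open Scope ring_scope.

Definition log2 {R : realType} (x : R) : R := ln x / ln 2.

Definition prob {R : realType} {Omega : finType} (E : {set Omega}) : R :=
  #|E|%:R / #|Omega|%:R.

(* Conditional mutual information I(A : B | C) (log base 2), for random variables
   A B C defined on the uniform finite sample space Omega:
     sum_{a,b,c} p(a,b,c) log( p(a,b,c) p(c) / (p(a,c) p(b,c)) ),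
   written as an expectation over the outcomes w (only outcomes of positive
   probability contribute, so 0 log 0 terms never arise). *)
Definition cond_mutual_info {R : realType} {Omega : finType}
    {TA TB TC : eqType} (A : Omega -> TA) (B : Omega -> TB) (C : Omega -> TC) : R :=
  \sum_(w : Omega)
     (#|Omega|%:R)^-1 *
     log2 (prob [set w' | [&& A w' == A w, B w' == B w & C w' == C w]]
           * prob [set w' | C w' == C w]
           / (prob [set w' | (A w' == A w) && (C w' == C w)]
              * prob [set w' | (B w' == B w) && (C w' == C w)])).

(* Sample space: outcome ((y, v), w) with y = (y_1..y_n), v, and
   w = (v_1 .. v_{n-1}), all coordinates in {0..N-1}, N = 2^m; uniform. *)
Notation Omega m n :=
  ({ffun 'I_n -> 'I_(2^m)} * 'I_(2^m) * {ffun 'I_n.-1 -> 'I_(2^m)})%type.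

Definition NN (m : nat) : int := (2 ^ m)%:Z.
Definition DD (m : nat) : int := (2 ^ (m + 2))%:Z.

Definition v_last (m n : nat) (om : Omega m n) : int :=
  (((4 * (om.1.2 : nat)%:Z - 4 * \sum_(j < n.-1) (om.2 j : nat)%:Z) %% DD m)%Z
     %/ 4)%Z.

Definition v_i (m n : nat) (om : Omega m n) (i : 'I_n) : int :=
  if @insub _ (fun k => (k < n.-1)%N) 'I_n.-1 (i : nat) is Some j
  then (om.2 j : nat)%:Z else v_last om.

Definition y_i (m n : nat) (om : Omega m n) (i : 'I_n) : int := (om.1.1 i : nat)%:Z.

Definition msgs (m n : nat) (x : {ffun 'I_n -> 'I_(2^m)}) (om : Omega m n)
  : {ffun 'I_n -> int} :=
  [ffun i => let p := 2 * (x i : nat)%:Z + 1 in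
             let q := 2 * y_i om i + 1 in
             let s := ((4 * v_i om i - 2 * y_i om i - 1) %% DD m)%Z in
             ((s + p * q) %% DD m)%Z].

Definition XB (m n : nat) (om : Omega m n) := (om.1.1, om.1.2).

Definition out_u (m n : nat) (x : {ffun 'I_n -> 'I_(2^m)}) (om : Omega m n) : int :=
  ((\sum_(i < n) (x i : nat)%:Z * y_i om i + (om.1.2 : nat)%:Z) %% NN m)%Z.

(* Main.v *)
Require Import Defs.
From mathcomp Require Import all_boot all_order all_algebra.
From mathcomp Require Import reals exp.
From mathcomp Require Import ring.
Import Order.TTheory GRing.Theory Num.Theory.
Local Open Scope ring_scope.

Section Conc.
Variables (m n : nat) (x : {ffun 'I_n.+1 -> 'I_(2^m)}).
Local Notation N := (NN m).
Definition cg (a b : int) := (N %| a - b)%Z.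
Definition wv (om : Omega m n.+1) i := v_i om i + (x i : nat)%:Z * y_i om i.
Definition UU (om : Omega m n.+1) :=
  \sum_(i < n.+1) (x i : nat)%:Z * y_i om i + (om.1.2 : nat)%:Z.

Lemma N_gt0 : 0 < N. Proof. by rewrite /NN ltz_nat expn_gt0. Qed.
Lemma N_neq0 : N != 0. Proof. by rewrite gt_eqF // N_gt0. Qed.
Lemma DD4 : DD m = 4 * N. Proof. by rewrite /DD /NN expnD mulnC PoszM. Qed.

Lemma cg_trans {a b c} : cg a b -> cg b c -> cg a c.
Proof.
rewrite /cg => h1 h2; have -> : a - c = (a - b) + (b - c) by ring.
exact: rpredD.
Qed.
Lemma cg_sym {a b} : cg a b -> cg b a.
Proof. by rewrite /cg -opprB rpredN. Qed.
Lemma cg_addr a b c : cg (a + c) (b + c) = cg a b.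
Proof. by rewrite /cg opprD addrACA subrr addr0. Qed.
Lemma cg_mod a : cg (a %% N)%Z a.
Proof. by rewrite /cg -eqz_mod_dvd; apply/eqP; exact: modz_mod. Qed.
Lemma cg_ord (a b : 'I_(2^m)) : cg (a : nat)%:Z (b : nat)%:Z -> a = b.
Proof.
rewrite /cg -eqz_mod_dvd !modz_small ?ltz_nat ?ltn_ord //.
by move/eqP => [] /val_inj.
Qed.

Lemma Kmsg (om om' : Omega m n.+1) i : (msgs x om i == msgs x om' i) = cg (wv om i) (wv om' i).
Proof.
rewrite !ffunE /= !modzDml eqz_mod_dvd /cg DD4.
rewrite (_ : _ - _ = 4 * (wv om i - wv om' i)); last by rewrite /wv; ring.
by rewrite dvdz_mul2l.
Qed.

Lemma vlast (om : Omega m n.+1) : cg (v_last om) ((om.1.2:nat)%:Z - \sum_(j < n) (om.2 j : nat)%:Z).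
Proof.
rewrite /v_last.
rewrite (_ : 4 * _ - 4 * _ = 4 * ((om.1.2:nat)%:Z - \sum_(j<n) (om.2 j:nat)%:Z)); last by ring.
by rewrite DD4 -mulz_modr // mulKz // cg_mod.
Qed.

Lemma vi_w (om : Omega m n.+1) j : v_i om (widen_ord (leqnSn n) j) = (om.2 j : nat)%:Z.
Proof.
rewrite /v_i; case: insubP => [j' _ /= hj | ]; last by rewrite /= ltn_ord.
by rewrite (_ : j' = j) //; apply: val_inj.
Qed.

Lemma vi_max (om : Omega m n.+1) : v_i om ord_max = v_last om.
Proof. by rewrite /v_i; case: insubP => [j' | //]; rewrite /= ltnn. Qed.

Lemma sumW (om : Omega m n.+1) : cg (\sum_i wv om i) (UU om).
Proof.
have e : \sum_(i < n.+1) wv om i = \sum_(j<n) (om.2 j:nat)%:Z +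
   \sum_(j < n) (x (widen_ord (leqnSn n) j) : nat)%:Z * y_i om (widen_ord (leqnSn n) j)
   + (v_last om + (x ord_max : nat)%:Z * y_i om ord_max).
  rewrite big_ord_recr /= /wv vi_max big_split /=; congr (_ + _ + _).
  by apply: eq_bigr => j _; rewrite vi_w.
rewrite e /UU big_ord_recr /=.
move: (vlast om); rewrite /cg.
match goal with |- is_true (?E \in _) -> is_true (?F \in _) => rewrite (_ : F = E) //; ring end.
Qed.

Lemma ordS_ind (P : 'I_n.+1 -> Prop) :
  (forall j : 'I_n, P (widen_ord (leqnSn n) j)) -> P ord_max -> forall i, P i.
Proof.
move=> hw hm i; case: (ltnP i n) => h.
  by have -> : i = widen_ord (leqnSn n) (Ordinal h) by apply: val_inj.
have -> : i = ord_max by apply: val_inj; apply/eqP; rewrite /= eqn_leq h -ltnS ltn_ord.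
done.
Qed.
Lemma hAC (om om' : Omega m n.+1) : msgs x om = msgs x om' -> out_u x om = out_u x om'.
Proof.
move=> H.
have h i : cg (wv om i) (wv om' i) by rewrite -Kmsg H.
have hs : cg (\sum_i wv om i) (\sum_i wv om' i).
  by rewrite /cg -sumrB; apply: rpred_sum => i _; exact: h.
have hu : cg (UU om) (UU om').
  exact: cg_trans (cg_sym (sumW om)) (cg_trans hs (sumW om')).
by apply/eqP; rewrite eqz_mod_dvd.
Qed.

Lemma hinj b (vs vs' : {ffun 'I_n -> 'I_(2^m)}) :
  msgs x (b, vs) = msgs x (b, vs') -> vs = vs'.
Proof.
move=> H; apply/ffunP => j.
have := Kmsg (b, vs) (b, vs') (widen_ord (leqnSn n) j).
rewrite H eqxx /wv !vi_w /= cg_addr.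
by move/esym/cg_ord.
Qed.

Lemma hsurj (w : Omega m n.+1) b' :
  out_u x (b', w.2) = out_u x w -> exists vs', msgs x (b', vs') = msgs x w.
Proof.
case: w => [[y v] vs]; case: b' => [y' v'] /= hc.
pose t (j : 'I_n) := (vs j : nat)%:Z + (x (widen_ord (leqnSn n) j) : nat)%:Z * (y (widen_ord (leqnSn n) j) : nat)%:Z
   - (x (widen_ord (leqnSn n) j) : nat)%:Z * (y' (widen_ord (leqnSn n) j) : nat)%:Z.
have t0 j : 0 <= (t j %% N)%Z by apply: modz_ge0; exact: N_neq0.
have tl j : (`|(t j %% N)%Z|%N < 2 ^ m)%N.
  by rewrite -ltz_nat abszE ger0_norm // ltz_pmod // N_gt0.
pose vs' : {ffun 'I_n -> 'I_(2^m)} := [ffun j => Ordinal (tl j)].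
exists vs'.
set om' := ((y', v'), vs'); set w := ((y, v), vs).
have hw j : cg (wv om' (widen_ord (leqnSn n) j)) (wv w (widen_ord (leqnSn n) j)).
  rewrite /wv !vi_w /y_i /= ffunE /= abszE ger0_norm //.
  have := cg_mod (t j); rewrite /cg.
  match goal with |- is_true (?E \in _) -> is_true (?F \in _) => rewrite (_ : F = E) //; rewrite /t; ring end.
have hu : cg (UU om') (UU w).
  by rewrite /cg -eqz_mod_dvd; apply/eqP; exact: hc.
have hmax : cg (wv om' ord_max) (wv w ord_max).
  have e : wv om' ord_max - wv w ord_max =
     ((\sum_i wv om' i) - UU om') - ((\sum_i wv w i) - UU w) + (UU om' - UU w)
      - \sum_(j < n) (wv om' (widen_ord (leqnSn n) j) - wv w (widen_ord (leqnSn n) j)).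
    rewrite sumrB !big_ord_recr /=; ring.
  rewrite /cg e; apply: rpredB; last by apply: rpred_sum => j _; exact: hw j.
  by apply: rpredD => //; apply: rpredB; [exact: sumW | exact: sumW].
apply/ffunP; apply: ordS_ind => [j|]; apply/eqP; rewrite Kmsg //; exact: hw.
Qed.

End Conc.

Lemma cmi0 (R : realType) (B V : finType) (TA TB TC : eqType)
  (A : (B * V)%type -> TA) (XBf : (B * V)%type -> TB) (C : (B * V)%type -> TC)
  (hXB : forall w w', (XBf w' == XBf w) = (w'.1 == w.1))
  (hC : forall b v v', C (b, v) = C (b, v'))
  (hinj : forall b v v', A (b, v) = A (b, v') -> v = v')
  (hAC : forall w w', A w = A w' -> C w = C w')
  (hsurj : forall w b', C (b', w.2) = C w -> exists v', A (b', v') = A w) :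
  cond_mutual_info (R := R) A XBf C = 0.
Proof.
rewrite /cond_mutual_info big1 // => [[b v]] _.
set w := (b, v).
set S1 := [set w' | _].
set S2 := [set w' | C w' == C w].
set S3 := [set w' | _].
set S4 := [set w' | _].
have e1 : S1 = [set w].
  apply/setP => -[b' v']; rewrite !inE hXB /=.
  apply/idP/idP.
    case/and3P => /eqP hA /eqP hb _; move: hA; rewrite hb => /hinj ->; done.
  by move/eqP => [-> ->]; rewrite !eqxx.
have e4 : S4 = (pair b) @: [set: V].
  apply/setP => -[b' v']; rewrite !inE hXB /=.
  apply/idP/imsetP.
    by case/andP => /eqP -> _; exists v'.
  by case=> v'' _ [-> ->]; rewrite eqxx /= (hC b v'' v) eqxx.
have e3 : S3 = [set w' | A w' == A w].
  apply/setP => w'; rewrite !inE; apply/idP/idP; first by case/andP.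
  by move=> /eqP h; rewrite h (hAC _ _ h) !eqxx.
set Bc := [set b' | C (b', v) == C w].
have e2 : S2 = setX Bc [set: V].
  apply/setP => -[b' v']; rewrite !inE /= andbT (hC b' v' v) //.
have e3' : #|S3| = #|Bc|.
  have -> : Bc = fst @: S3.
    apply/setP => b'; rewrite !inE; apply/idP/imsetP; last first.
      case=> -[b'' v''] ; rewrite e3 inE => /eqP hA /= ->.
      by rewrite (hC b'' v v'') -(hAC _ _ hA) eqxx.
    move=> /eqP hc; have [v' hv'] := hsurj w b' hc.
    by exists (b', v'); rewrite // e3 inE hv'.
  rewrite card_in_imset // => - [b1 v1] [b2 v2]; rewrite e3 !inE => /eqP h1 /eqP h2 /= hb.
  move: h1; rewrite hb -h2 => /hinj -> //.
have hN : (#|S1| * #|S2| = #|S3| * #|S4|)%N.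
  rewrite e1 cards1 mul1n e2 cardsX e3' e4 card_imset //; last by move=> ? ? [].
have w1 : w \in S1 by rewrite e1 inE.
have w3 : w \in S3 by rewrite e3 inE.
have w4 : w \in S4 by rewrite e4; apply/imsetP; exists v.
have pos : forall (S : {set B * V}), w \in S -> (#|S|%:R : R) != 0.
  by move=> S hS; rewrite pnatr_eq0 -lt0n; apply/card_gt0P; exists w.
have k0 : (#|{: B * V}|%:R : R) != 0.
  by rewrite pnatr_eq0 -lt0n; apply/card_gt0P; exists w.
rewrite /prob.
set k := (#|{: B * V}|%:R : R).
have -> : #|S1|%:R / k * (#|S2|%:R / k) / (#|S3|%:R / k * (#|S4|%:R / k)) = 1 :> R.
  rewrite mulrACA [X in _ / X]mulrACA -!natrM hN divff //.
  by rewrite mulf_neq0 // ?natrM ?mulf_neq0 ?pos // invr_eq0.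
by rewrite /log2 ln1 mul0r mulr0.
Qed.

Theorem lemma4 (R : realType) (m n : nat) (hm : (1 <= m)%N) (hn : (1 <= n)%N)
    (x : {ffun 'I_n -> 'I_(2^m)}) :
  cond_mutual_info (R := R) (msgs x) (@XB m n) (out_u x) = 0.
Proof.
case: n hn x => [//|n] _ x.
apply: cmi0.
- by move=> [[? ?] ?] [[? ?] ?].
- by [].
- exact: hinj.
- exact: hAC.
- exact: hsurj.
Qed.
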